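(* Let $A=[1,1,\dots,1]\in\mathbb R^{1\times N}$, $\vec w\in\mathbb R^N$ with $\sum_{i=1}^N w_i>0$, $b=A\vec w$, and let $(\vec x,(\lambda_i)_{i=1}^N,\gamma)$ satisfy the KKT conditions $x_i-w_i+\gamma-\lambda_i=0$, $\lambda_ix_i=0$, $\lambda_i\ge0$, $x_i\ge0$ ($i=1,\dots,N$), $\sum_{i=1}^Nx_i=b$ of the problem $\min_{\vec x\in\mathbb R^N}\frac12\|\vec x-\vec w\|_2^2$ subject to $A\vec x=b$, $x_i\ge0$. Let $B=\{j:x_j=0\}$ and let $\#B$ be its cardinality. Then: (i) for all $i\in B$ (i.e. $x_i=0$), $\lambda_i-\frac1N\sum_{j\in B}\lambda_j=-w_i$; (ii) for all $i$ with $x_i>0$, $x_i=w_i+\frac{1}{N-\#B}\sum_{j\in B}w_j$. *)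

(* Defs.v *)
From HB Require Import structures.
From mathcomp Require Import all_boot all_order all_algebra.
Set Implicit Arguments. Unset Strict Implicit. Unset Printing Implicit Defensive.
Import Order.TTheory GRing.Theory Num.Theory.
Local Open Scope ring_scope.

Definition KKT (R : realFieldType) (N : nat) (w x lam : 'I_N -> R) (gamma : R) : Prop :=
  [/\ forall i, x i - w i + gamma - lam i = 0,
      forall i, lam i * x i = 0,
      forall i, 0 <= lam i,
      forall i, 0 <= x i
    & \sum_(i < N) x i = \sum_(i < N) w i].

(* Main.v *)
Require Import Defs.
From HB Require Import structures.
From mathcomp Require Import all_boot all_order all_algebra.
From mathcomp Require Import ring lra.
Import Order.TTheory GRing.Theory Num.Theory.
Local Open Scope ring_scope.

Theorem lemma3 (R : realFieldType) (N : nat) (w x lam : 'I_N -> R) (gamma : R) :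
  0 < \sum_(i < N) w i ->
  KKT w x lam gamma ->
  let B := [set j : 'I_N | x j == 0] in
  (forall i, i \in B -> lam i - N%:R^-1 * \sum_(j in B) lam j = - w i) /\
  (forall i, 0 < x i -> x i = w i + (N - #|B|)%:R^-1 * \sum_(j in B) w j).
Proof.
move=> wpos [E1 E2 E3 E4 E5] B.
have lam0 : forall j, j \notin B -> lam j = 0.
  move=> j; rewrite inE => /negbTE xj.
  by have /eqP := E2 j; rewrite mulf_eq0 xj orbF => /eqP.
have Npos : (0 < N)%N.
  case: (posnP N) => [N0|//]; move: wpos; rewrite big1 ?ltxx // => i _.
  by have := ltn_ord i; rewrite {2}N0.
have N0 : (N%:R : R) != 0 by rewrite pnatr_eq0 -lt0n.
have HL : \sum_(i < N) lam i = \sum_(j in B) lam j.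
  rewrite (bigID (mem B)) /= [X in _ + X]big1 ?addr0 //.
have Hg : gamma * N%:R = \sum_(j in B) lam j.
  have : \sum_(i < N) (x i - w i + gamma - lam i) = 0 by rewrite big1 // => j _; exact: E1.
  rewrite !sumrB big_split /= sumrB E5 subrr add0r sumr_const card_ord HL.
  by move/eqP; rewrite subr_eq0 mulr_natr => /eqP.
have Hg' : gamma = N%:R^-1 * \sum_(j in B) lam j.
  by rewrite -Hg mulrC mulfK.
split.
  move=> i iB; rewrite -Hg'.
  have := E1 i; move: iB; rewrite inE => /eqP ->.
  by move=> h; lra.
move=> i xi.
have iB : i \notin B by rewrite inE gt_eqF.
have Hx : forall j, j \notin B -> x j = w j - gamma.
  move=> j jB; have := E1 j; rewrite lam0 // => h.
  by lra.
have HxS : \sum_(i < N) x i = \sum_(j | j \notin B) (w j - gamma).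
  rewrite (bigID (mem B)) /= big1 ?add0r; last by move=> j; rewrite inE => /eqP.
  by apply: eq_bigr => j jB; rewrite Hx.
have HwS : \sum_(i < N) w i = \sum_(j in B) w j + \sum_(j | j \notin B) w j.
  by rewrite (bigID (mem B)).
have HgS : \sum_(j | j \notin B) gamma = gamma *+ N - gamma *+ #|B|.
  have H : \sum_(j < N) gamma = \sum_(j in B) gamma + \sum_(j | j \notin B) gamma.
    exact: bigID.
  move: H; rewrite sumr_const card_ord [X in _ = X + _]sumr_const => ->.
  by rewrite addrAC subrr add0r.
have cardB : (#|B| < N)%N.
  have := cardsC B; rewrite card_ord => HB; rewrite -[X in (_ < X)%N]HB.
  rewrite -{1}[#|B|]addn0 ltn_add2l card_gt0; apply/set0Pn; exists i.
  by rewrite inE.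
have Hc : gamma * (N - #|B|)%:R = - \sum_(j in B) w j.
  move: E5; rewrite HxS HwS sumrB HgS (natrB _ (ltnW cardB)) mulrBr !mulr_natr => h.
  lra.
have c0 : ((N - #|B|)%N%:R : R) != 0 by rewrite pnatr_eq0 subn_eq0 -ltnNge.
have Hg2 : gamma = (N - #|B|)%:R^-1 * (- \sum_(j in B) w j).
  by rewrite -Hc mulrC mulfK.
by rewrite Hx // Hg2 mulrN opprK.
Qed.
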